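(* Let $\theta:\mathbb{A}\to\mathbb{A}^\lambda$ be a primitive substitution satisfying the standing assumptions, with height $h=h(\theta)$ and pure base $\theta^{(h)}$. Then $c(\theta)=h(\theta)\cdot c(\theta^{(h)})$. In particular $h(\theta)\mid c(\theta)$.
   Context: Substitution $\theta:\mathbb{A}\to\mathbb{A}^\lambda$ of constant length $\lambda\ge2$, extended by concatenation; primitive: some iterate $\theta^k(a)$ contains all letters for each $a$. Standing assumptions: $\theta(a_0)_0=a_0$ for some $a_0$, $\theta$ injective on letters, subshift infinite; $u$ the fixed point with $u[0]=a_0$. Height $h(\theta)=\max\{m\ge1:\gcd(m,\lambda)=1,\ m\mid\gcd\{r\ge1:u[r]=u[0]\}\}$; column number $c(\theta)=\min_{k\ge1,0\le j<\lambda^k}|\{\theta^k(a)_j:a\in\mathbb{A}\}|$ (for any primitive substitution these are defined analogously, using a fixed point of a suitable power). Pure base: let $\mathbb{A}^{(h)}=\{u[mh,mh+h-1]:m\ge0\}\subset\mathbb{A}^h$ and define $\theta^{(h)}:\mathbb{A}^{(h)}\to(\mathbb{A}^{(h)})^\lambda$ by $\theta^{(h)}(w)_j=\theta(w)[jh,(j+1)h-1]$ for $0\le j<\lambda$ (here $\theta(w)$ is the concatenation $\theta(w_0)\cdots\theta(w_{h-1})$ of length $\lambda h$); $\theta^{(h)}$ is a primitive substitution of length $\lambda$. *)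

(* Defs.v *)
From HB Require Import structures.
From mathcomp Require Import all_boot all_order all_algebra.
From Stdlib Require Import ClassicalEpsilon.
Set Implicit Arguments. Unset Strict Implicit. Unset Printing Implicit Defensive.

Definition pb (P : Prop) : bool :=
  if excluded_middle_informative P then true else false.

Section Subst.
Variables (T : Type) (lam : nat) (s : T -> lam.-tuple T).

(* iter_sub k a j = theta^k(a)_j  (meaningful for j < lam^k);
   theta^{k+1}(a) = theta(theta^k(a)) by concatenation. *)
Fixpoint iter_sub (k : nat) (a : T) (j : nat) : T :=
  match k with
  | 0 => a
  | k'.+1 => let b := iter_sub k' a (j %/ lam) in nth b (s b) (j %% lam)
  end.
End Subst.

Definition primitive (A : finType) lam (theta : A -> lam.-tuple A) : Prop :=
  exists k, 0 < k /\ forall a b : A, exists j, j < lam ^ k /\ iter_sub theta k a j = b.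

(* The fixed point u with u[0] = a0 (assuming theta(a0)_0 = a0, lam >= 2):
   u[n] = theta^{n+1}(a0)_n. *)
Definition fixpt (A : Type) lam (theta : A -> lam.-tuple A) (a0 : A) (n : nat) : A :=
  iter_sub theta n.+1 a0 n.

Definition in_subshift (A : Type) lam (theta : A -> lam.-tuple A) (a0 : A)
  (x : int -> A) : Prop :=
  forall (i : int) (n : nat), exists m : nat,
    forall t, t < n -> x (i + Posz t)%R = fixpt theta a0 (m + t).

Definition infinite_subshift (A : Type) lam (theta : A -> lam.-tuple A) (a0 : A) : Prop :=
  ~ exists (n : nat) (f : 'I_n -> int -> A),
      forall x, in_subshift theta a0 x -> exists i, x = f i.

Definition return_time (A : Type) lam (theta : A -> lam.-tuple A) (a0 : A) (r : nat) : Prop :=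
  0 < r /\ fixpt theta a0 r = fixpt theta a0 0.

Definition is_return_gcd (A : Type) lam (theta : A -> lam.-tuple A) (a0 : A) (g : nat) : Prop :=
  (forall r, return_time theta a0 r -> g %| r) /\
  (forall d, (forall r, return_time theta a0 r -> d %| r) -> d %| g).

Definition is_height (A : Type) lam (theta : A -> lam.-tuple A) (a0 : A) (h : nat) : Prop :=
  exists g, is_return_gcd theta a0 g /\
    [/\ 0 < h, coprime h lam, h %| g &
        forall m, 0 < m -> coprime m lam -> m %| g -> m <= h].

Definition is_colnum (T : finType) lam (s : T -> lam.-tuple T) (B : {set T}) (c : nat) : Prop :=
  (exists k j, [/\ 0 < k, j < lam ^ k & #|[set iter_sub s k a j | a in B]| = c]) /\
  (forall k j, 0 < k -> j < lam ^ k -> c <= #|[set iter_sub s k a j | a in B]|).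

Definition ublock (A : Type) lam (theta : A -> lam.-tuple A) (a0 : A) (h m : nat) : h.-tuple A :=
  [tuple fixpt theta a0 (m * h + t) | t < h].

Definition pure_alphabet (A : finType) lam (theta : A -> lam.-tuple A) (a0 : A) (h : nat)
  : {set h.-tuple A} :=
  [set w | pb (exists m, w = ublock theta a0 h m)].

(* theta^(h)(w)_j = theta(w)[jh, (j+1)h - 1], where theta(w) = theta(w_0)...theta(w_{h-1}). *)
Definition pure_base (A : Type) lam (theta : A -> lam.-tuple A) (a0 : A) (h : nat)
  (w : h.-tuple A) : lam.-tuple (h.-tuple A) :=
  [tuple [tuple (let i := (j : nat) * h + t in
                 nth a0 (theta (nth a0 w (i %/ lam))) (i %% lam)) | t < h] | j < lam].
Arguments pure_base {A lam} theta a0 h w.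
Arguments pure_alphabet {A lam} theta a0 h.
Arguments ublock {A lam} theta a0 h m.

(* Main.v *)
Require Import Defs.
From HB Require Import structures.
From mathcomp Require Import all_boot all_order all_algebra.
From mathcomp Require Import zify.
From Stdlib Require Import ClassicalEpsilon.
Set Implicit Arguments. Unset Strict Implicit. Unset Printing Implicit Defensive.

Lemma iter_sub0 (T : Type) lam (s : T -> lam.-tuple T) a j : iter_sub s 0 a j = a.
Proof. by []. Qed.

Lemma iter_subS (T : Type) lam (s : T -> lam.-tuple T) k a j x :
  0 < lam ->
  iter_sub s k.+1 a j = nth x (s (iter_sub s k a (j %/ lam))) (j %% lam).
Proof.
move=> lp /=; apply: set_nth_default; by rewrite size_tuple ltn_mod.
Qed.

Lemma stab (A : Type) lam (theta : A -> lam.-tuple A) a0 :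
  0 < lam -> nth a0 (theta a0) 0 = a0 ->
  forall k n, n < lam ^ k -> iter_sub theta k.+1 a0 n = iter_sub theta k a0 n.
Proof.
move=> lp H0; elim=> [|k IH] n.
  rewrite expn0 ltnS leqn0 => /eqP ->.
  by rewrite (@iter_subS _ _ _ _ _ _ a0 lp) div0n mod0n.
move=> Hn.
rewrite (@iter_subS _ _ _ _ _ _ a0 lp) IH; last by rewrite ltn_divLR // -expnSr.
by rewrite (@iter_subS _ _ _ _ _ _ a0 lp).
Qed.

Lemma stab2 (A : Type) lam (theta : A -> lam.-tuple A) a0 :
  1 < lam -> nth a0 (theta a0) 0 = a0 ->
  forall k n d, n < lam ^ k -> iter_sub theta (k + d) a0 n = iter_sub theta k a0 n.
Proof.
move=> l1 H0 k n; have lp : 0 < lam by apply: ltnW.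
elim=> [|d IH] Hn; first by rewrite addn0.
rewrite addnS stab //; last first.
  apply: (leq_trans Hn); rewrite leq_exp2l ?leq_addr //.
by rewrite IH.
Qed.

Lemma fixpt_iter (A : Type) lam (theta : A -> lam.-tuple A) a0 :
  1 < lam -> nth a0 (theta a0) 0 = a0 ->
  forall k n, n < lam ^ k -> fixpt theta a0 n = iter_sub theta k a0 n.
Proof.
move=> l1 H0 k n Hn; have lp : 0 < lam by apply: ltnW.
rewrite /fixpt.
have Hn1 : n < lam ^ n.+1 by apply: (ltn_trans (ltn_expl n l1)); rewrite ltn_exp2l.
case: (leqP k n.+1) => Hk.
  by rewrite -(subnKC Hk) stab2.
by rewrite -(subnKC (ltnW Hk)) stab2.
Qed.

Lemma fixpt0 (A : Type) lam (theta : A -> lam.-tuple A) a0 :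
  1 < lam -> nth a0 (theta a0) 0 = a0 -> fixpt theta a0 0 = a0.
Proof.
move=> l1 H0; rewrite (@fixpt_iter _ _ _ _ l1 H0 0 0) //; by rewrite expn0.
Qed.

Lemma fixpt_U1 (A : Type) lam (theta : A -> lam.-tuple A) a0 :
  1 < lam -> nth a0 (theta a0) 0 = a0 ->
  forall n r x, r < lam ->
  nth x (theta (fixpt theta a0 n)) r = fixpt theta a0 (n * lam + r).
Proof.
move=> l1 H0 n r x Hr; have lp : 0 < lam by apply: ltnW.
have Hn1 : n < lam ^ n.+1 by apply: (ltn_trans (ltn_expl n l1)); rewrite ltn_exp2l.
rewrite (@fixpt_iter _ _ _ _ l1 H0 n.+1 n) //.
rewrite (@fixpt_iter _ _ _ _ l1 H0 n.+2 (n * lam + r)); last first.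
  rewrite expnSr; apply: (@leq_trans (n.+1 * lam)).
    by rewrite mulSn addnC ltn_add2r.
  by rewrite leq_mul2r Hn1 orbT.
rewrite [RHS](@iter_subS _ _ _ _ _ _ x lp).
by rewrite divnMDl // divn_small // addn0 modnMDl modn_small.
Qed.

Lemma fixpt_U (A : Type) lam (theta : A -> lam.-tuple A) a0 :
  1 < lam -> nth a0 (theta a0) 0 = a0 ->
  forall k n j, j < lam ^ k ->
  iter_sub theta k (fixpt theta a0 n) j = fixpt theta a0 (n * lam ^ k + j).
Proof.
move=> l1 H0; have lp : 0 < lam by apply: ltnW.
elim=> [|k IH] n j.
  by rewrite expn0 ltnS leqn0 => /eqP ->; rewrite muln1 addn0.
move=> Hj.
rewrite (@iter_subS _ _ _ _ _ _ (fixpt theta a0 0) lp) IH; last by rewrite ltn_divLR // -expnSr.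
rewrite fixpt_U1 // ?ltn_mod //.
by rewrite mulnDl -mulnA -expnSr -addnA -divn_eq.
Qed.

Lemma nth_ublock (A : Type) lam (theta : A -> lam.-tuple A) a0 h m i x :
  i < h -> nth x (ublock theta a0 h m) i = fixpt theta a0 (m * h + i).
Proof.
move=> Hi; have -> : i = Ordinal Hi by [].
by rewrite nth_mktuple.
Qed.

Lemma pb_ublock (A : Type) lam (theta : A -> lam.-tuple A) a0 h :
  1 < lam -> nth a0 (theta a0) 0 = a0 ->
  forall m j x, j < lam ->
  nth x (pure_base theta a0 h (ublock theta a0 h m)) j = ublock theta a0 h (m * lam + j).
Proof.
move=> l1 H0 m j x Hj; have lp : 0 < lam by apply: ltnW.
have -> : j = Ordinal Hj by [].
rewrite nth_mktuple; apply: eq_from_tnth => t.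
rewrite !tnth_mktuple /=.
have Ht : (j * h + t) %/ lam < h.
  rewrite ltn_divLR //; apply: (@leq_trans (j.+1 * h)).
    by rewrite mulSn addnC ltn_add2r.
  by rewrite mulnC leq_mul2l Hj orbT.
rewrite nth_ublock // fixpt_U1 // ?ltn_mod //.
congr (fixpt theta a0 _).
rewrite mulnDl -addnA -divn_eq; lia.
Qed.

Lemma pcol (A : Type) lam (theta : A -> lam.-tuple A) a0 h :
  1 < lam -> nth a0 (theta a0) 0 = a0 ->
  forall k m J, J < lam ^ k ->
  iter_sub (pure_base theta a0 h) k (ublock theta a0 h m) J = ublock theta a0 h (m * lam ^ k + J).
Proof.
move=> l1 H0; have lp : 0 < lam by apply: ltnW.
elim=> [|k IH] m J.
  by rewrite expn0 ltnS leqn0 => /eqP ->; rewrite muln1 addn0.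
move=> Hj.
rewrite (@iter_subS _ _ _ _ _ _ (ublock theta a0 h 0) lp) IH; last by rewrite ltn_divLR // -expnSr.
rewrite pb_ublock // ?ltn_mod //.
by rewrite mulnDl -mulnA -expnSr -addnA -divn_eq.
Qed.

Lemma modcancel h l x y : coprime h l -> (x * l == y * l %[mod h]) -> (x == y %[mod h]).
Proof.
move=> co.
wlog le : x y / y <= x.
  move=> W; case: (leqP y x) => H; first exact: W.
  rewrite eq_sym => H'; rewrite eq_sym; apply: W => //; exact: ltnW.
rewrite eqn_mod_dvd ?leq_mul2r ?le ?orbT // -mulnBl Gauss_dvdl //.
by rewrite eqn_mod_dvd.
Qed.

Lemma surjmod h l j t : coprime h l -> t < h -> exists2 s, s < h & (s * l + j) %% h = t.
Proof.
move=> co Ht; have hp : 0 < h by apply: leq_ltn_trans Ht.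
pose f (s : 'I_h) : 'I_h := Ordinal (ltn_pmod (s * l + j) hp).
have fi : injective f.
  move=> a b /(congr1 val) /= /eqP; rewrite eqn_modDr => /(modcancel co).
  rewrite !modn_small // => /eqP ab; exact: val_inj.
have [g fg gf] := injF_bij fi.
exists (g (Ordinal Ht)) => //.
by have := congr1 val (gf (Ordinal Ht)).
Qed.

Lemma card_part (A : finType) (h : nat) (cls : A -> nat) (X : {set A}) :
  (forall x, cls x < h) -> #|X| = \sum_(t < h) #|[set x in X | cls x == t]|.
Proof.
move=> Hc.
rewrite -sum1_card (partition_big (fun x => Ordinal (Hc x)) xpredT) //=.
apply: eq_bigr => t _; rewrite -sum1_card; apply: eq_bigl => x.
by rewrite inE -(inj_eq val_inj).
Qed.

Lemma pbP (P : Prop) : pb P = true <-> P.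
Proof. by rewrite /pb; case: excluded_middle_informative. Qed.

Lemma occ (A : finType) lam (theta : A -> lam.-tuple A) a0 :
  1 < lam -> primitive theta -> nth a0 (theta a0) 0 = a0 ->
  forall b, exists n, fixpt theta a0 n == b.
Proof.
move=> l1 [k [kp Hk]] H0 b.
have [j [jl Hj]] := Hk a0 b.
exists j; rewrite -(fixpt0 l1 H0) in Hj.
by rewrite fixpt_U // mul0n add0n in Hj; rewrite Hj.
Qed.

Lemma occL (A : finType) lam (theta : A -> lam.-tuple A) a0 h g :
  1 < lam -> primitive theta -> nth a0 (theta a0) 0 = a0 ->
  is_return_gcd theta a0 g -> h %| g -> coprime h lam ->
  forall n n', fixpt theta a0 n = fixpt theta a0 n' -> n %% h = n' %% h.
Proof.
move=> l1 [k [kp Hk]] H0 [Hg _] hg co n n' E.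
have D : forall p, fixpt theta a0 p = a0 -> h %| p.
  move=> [|p] Hp; first by rewrite dvdn0.
  apply: (dvdn_trans hg); apply: Hg; split => //.
  by rewrite Hp fixpt0.
have [q [ql Hq]] := Hk (fixpt theta a0 n) a0.
have Hq' := Hq; rewrite E in Hq'.
rewrite fixpt_U // in Hq; rewrite fixpt_U // in Hq'.
have d1 := D _ Hq; have d2 := D _ Hq'.
apply/eqP; apply: (@modcancel _ (lam ^ k)); first exact: coprimeXr.
rewrite -(eqn_modDr q).
by rewrite (eqP d1) (eqP d2).
Qed.

Theorem mainTheorem6 (A : finType) (lam : nat) (theta : A -> lam.-tuple A) (a0 : A) :
  2 <= lam ->
  primitive theta ->
  nth a0 (theta a0) 0 = a0 ->
  injective theta ->
  infinite_subshift theta a0 ->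
  forall h c ch : nat,
    is_height theta a0 h ->
    is_colnum theta [set: A] c ->
    is_colnum (pure_base theta a0 h) (pure_alphabet theta a0 h) ch ->
    c = h * ch /\ h %| c.
Proof.
move=> l1 prim H0 _ _ h c ch [g [Hg [hp co hg _]]]
  [[k1 [j1 [k1p j1l Fc]]] Fmin] [[k0 [J0 [k0p J0l Ech]]] Emin].
have lp : 0 < lam by apply: ltnW.
have L := occL l1 prim H0 Hg hg co.
have O := occ l1 prim H0.
pose cls (x : A) := xchoose (O x) %% h.
have clsu : forall n, cls (fixpt theta a0 n) = n %% h.
  move=> n; rewrite /cls; apply: L; exact: (eqP (xchooseP (O _))).
have clslt : forall x, cls x < h by move=> x; rewrite ltn_mod.
pose F a := iter_sub theta k1 a j1.
have Fu : forall n, F (fixpt theta a0 n) = fixpt theta a0 (n * lam ^ k1 + j1).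
  by move=> n; rewrite /F fixpt_U.
pose S := [set F a | a in [set: A]].
pose St t := [set x in S | cls x == t].
have cS : c = \sum_(t < h) #|St t| by rewrite -Fc (card_part _ clslt).
pose P := lam ^ k1.
have Pp : 0 < P by rewrite expn_gt0 lp.
have D1 : forall t, t < h -> ch <= #|St t|.
  move=> t tl.
  have [s sl Hs] := surjmod j1 (coprimeXr k1 co) tl.
  pose k2 := h * 2. pose Q := lam ^ k2.
  have Qb : h * 2 < Q := ltn_expl _ l1.
  pose X0 := s * (P * Q) + j1 * Q.
  pose r := (h - X0 %% h) %% h.
  have rl : r < h by rewrite ltn_mod.
  have Xr : h %| X0 + r.
    rewrite /dvdn /r modnDmr -modnDml subnKC ?modnn //.
    by apply: ltnW; rewrite ltn_mod.
  pose J := (X0 + r) %/ h.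
  have Jh : J * h = X0 + r by rewrite divnK.
  have JL : J < lam ^ (k1 + k2).
    rewrite expnD -/P -/Q -(ltn_pmul2r hp) Jh /X0.
    have e1 : s * (P * Q) + P * Q <= P * Q * h by rewrite -mulSnr mulnC leq_mul2l sl orbT.
    have e2 : j1 * Q + Q <= P * Q by rewrite -mulSnr leq_mul2r j1l orbT.
    lia.
  have := Emin (k1 + k2) J (ltn_addr _ k1p) JL.
  move/leq_trans; apply.
  pose G (x : A) : h.-tuple A := [tuple iter_sub theta k2 x (r + t') | t' < h].
  apply: (@leq_trans #|[set G x | x in St t]|); last exact: leq_imset_card.
  apply: subset_leq_card; apply/subsetP => y /imsetP [w wP ->].
  move: wP; rewrite inE => /pbP [m ->].
  rewrite pcol //.
  apply/imsetP; exists (fixpt theta a0 ((m * h + s) * P + j1)).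
    rewrite inE; apply/andP; split.
      rewrite -Fu; apply/imsetP; exists (fixpt theta a0 (m * h + s)) => //.
    rewrite clsu mulnDl mulnAC -addnA modnMDl Hs //.
  apply: eq_from_tnth => t'; rewrite !tnth_mktuple fixpt_U //; last first.
    by have := ltn_ord t'; rewrite /= -/Q; lia.
  congr (fixpt theta a0 _).
  rewrite mulnDl Jh /X0 expnD -/P -/Q; lia.
have D2 : forall t, t < h -> #|St t| <= ch.
  move=> t tl; rewrite leqNgt; apply/negP => Hlt.
  pose k2 := h. pose Q := lam ^ k2.
  have hQ : h < Q := ltn_expl _ l1.
  pose P0 := lam ^ k0.
  have P0p : 0 < P0 by rewrite expn_gt0 lp.
  pose s := J0 * h %/ P0. pose r0 := J0 * h %% P0.
  have Jdec : J0 * h = s * P0 + r0 := divn_eq _ _.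
  have sl : s < h by rewrite ltn_divLR // mulnC ltn_mul2l hp J0l.
  have r0l : r0 < P0 by rewrite ltn_mod.
  have [t'' t''l Ht''] := surjmod j1 (coprimeXr k1 co) tl.
  pose q0 := r0 * Q + t''.
  pose K := k0 + k2 + k1.
  have lK : lam ^ K = P0 * Q * P by rewrite !expnD.
  have q0l : q0 < P0 * Q.
    have : r0 * Q + Q <= P0 * Q by rewrite -mulSnr leq_mul2r r0l orbT.
    rewrite /q0; lia.
  have q0Pl : q0 * P + j1 < lam ^ K.
    rewrite lK; have : q0 * P + P <= P0 * Q * P by rewrite -mulSnr leq_mul2r q0l orbT.
    lia.
  pose H a := iter_sub theta K a (q0 * P + j1).
  have Hu : forall n, H (fixpt theta a0 n) = F (fixpt theta a0 (n * (P0 * Q) + q0)).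
    move=> n; rewrite /H fixpt_U // Fu lK; congr (fixpt theta a0 _); rewrite -/P; lia.
  pose HA := [set H a | a in [set: A]].
  have cH : c <= #|HA| := Fmin K (q0 * P + j1) (ltn_addl _ k1p) q0Pl.
  have HS : forall t', [set x in HA | cls x == t'] \subset St t'.
    move=> t'; apply/subsetP => x; rewrite !inE => /andP [/imsetP [a _ ->] ->].
    rewrite andbT; have /eqP <- := xchooseP (O a); rewrite Hu.
    by apply/imsetP; eexists.
  have Ht : #|[set x in HA | cls x == t]| <= ch.
    rewrite -Ech.
    pose E := [set iter_sub (pure_base theta a0 h) k0 w J0 | w in pure_alphabet theta a0 h].
    pose Phi (w : h.-tuple A) := F (iter_sub theta k2 (nth a0 w 0) t'').
    apply: (leq_trans _ (leq_imset_card Phi E)).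
    apply: subset_leq_card; apply/subsetP => x; rewrite !inE => /andP [/imsetP [a _ ->]].
    have /eqP <- := xchooseP (O a); set n := xchoose _.
    rewrite Hu Fu clsu => /eqP Hc.
    have ns : n %% h = s.
      rewrite -(modn_small sl); apply/eqP.
      apply: (@modcancel _ (P0 * Q)); first by rewrite /P0 /Q -expnD; exact: coprimeXr.
      rewrite -(eqn_modDr q0); apply: (@modcancel _ P); first exact: coprimeXr.
      rewrite -(eqn_modDr j1) Hc.
      have -> : (s * (P0 * Q) + q0) * P + j1 = (J0 * Q * P) * h + (t'' * P + j1).
        rewrite /q0; nia.
      by rewrite modnMDl Ht''.
    have nd : n = n %/ h * h + s by rewrite {1}(divn_eq n h) ns.
    apply/imsetP; exists (iter_sub (pure_base theta a0 h) k0 (ublock theta a0 h (n %/ h)) J0).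
      apply/imsetP; exists (ublock theta a0 h (n %/ h)) => //.
      by rewrite inE; apply/pbP; exists (n %/ h).
    rewrite pcol // /Phi nth_ublock // fixpt_U //; last by rewrite -/Q; lia.
    rewrite [RHS]Fu -/P -/P0 -/Q; congr (fixpt theta a0 (_ * P + j1)).
    have JQ : J0 * h * Q = s * P0 * Q + r0 * Q by rewrite Jdec mulnDl.
    rewrite {1}nd addn0 /q0; lia.
  have := cS; rewrite (bigD1 (Ordinal tl)) //= => cS'.
  have := card_part HA clslt; rewrite (bigD1 (Ordinal tl)) //= => cH'.
  have : \sum_(i < h | i != Ordinal tl) #|[set x in HA | cls x == i]|
       <= \sum_(i < h | i != Ordinal tl) #|St i|.
    by apply: leq_sum => i _; apply: subset_leq_card.
  move=> Hsum; have := leq_add Ht Hsum; rewrite -cH' => H1.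
  by have := leq_trans cH H1; rewrite cS' leq_add2r leqNgt Hlt.
have ceq : c = h * ch.
  rewrite cS (eq_bigr (fun _ => ch)); last first.
    by move=> i _; apply/eqP; rewrite eqn_leq D2 ?D1.
  by rewrite sum_nat_const card_ord.
by split => //; rewrite ceq dvdn_mulr.
Qed.
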